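(* Let $r:\mathcal T\to\mathbb N\cup\{0\}$ be a function satisfying: (1) $r(\mathscr X)=0$ if and only if $\mathscr X=\mathbf 0$, and $r(\mathscr X)=1$ if and only if $\mathscr X$ is a rank-one tensor; (2) $r$ is constant on equivalence classes of $\sim$; (3) if $\mathscr X$ is a tensor of order $N$ with $\mathscr X\neq\mathbf 0$ and $\mathscr X$ not rank-one, then with $S_0=\{M\mid \mathscr I_{M,N}\text{ is a subtensor of some }\mathscr Y\sim\mathscr X\}$ and $S_1=\{\operatorname{rank}(\mathbf A)\mid \mathbf A\text{ is a submatrix of some }\mathscr Y\sim\mathscr X\}$ we have $r(\mathscr X)=\max(S_0\cup S_1\cup\{2\})$. Then $r=\mu$, where $\mu(\mathscr X)=\min\{s(\mathscr X)\mid s\text{ is a QZC rank function}\}$ for every $\mathscr X\in\mathcal T$.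
   Context: $\mathcal T$ is the collection of all real tensors (of all orders $N\ge1$ and all sizes). A rank-one tensor is one of the form $\mathbf a^{(1)}\circ\cdots\circ\mathbf a^{(N)}$, i.e. $x_{i_1\cdots i_N}=a^{(1)}_{i_1}\cdots a^{(N)}_{i_N}$, with all $\mathbf a^{(n)}$ nonzero vectors. $\mathscr I_{M,N}$ is the order-$N$ tensor of size $M\times\cdots\times M$ with $1$ in positions $(i,\dots,i)$ and $0$ elsewhere. A subtensor of $\mathscr X\in\mathbb R^{I_1\times\cdots\times I_N}$ is a tensor $\mathscr Y\in\mathbb R^{J_1\times\cdots\times J_N}$ with $y_{j_1\cdots j_N}=x_{i_{1j_1}\cdots i_{Nj_N}}$ for some indices $1\le i_{n1}<\cdots<i_{nJ_n}\le I_n$. A submatrix of $\mathscr X$ means a subtensor with $J_n=1$ for all but at most two modes, viewed as a vector or matrix (a vector having rank $1$ if nonzero, $0$ otherwise). For $\pi\in S_N$ (the symmetric group on $\{1,\dots,N\}$), the mode-permutation of $\mathscr X$ is the tensor $\mathscr Y$ with $y_{i_1\cdots i_N}=x_{i_{\pi(1)}\cdots i_{\pi(N)}}$ (with correspondingly permuted dimensions). The relation $\sim$ is the smallest equivalence relation on $\mathcal T$ with $\mathscr X\sim\alpha\mathscr X$ for all $\alpha\in\mathbb R\setminus\{0\}$ and $\mathscr X\sim\mathscr Y$ whenever $\mathscr Y$ is a mode-permutation of $\mathscr X$. A QZC rank function is a function $s:\mathcal T\to\mathbb N\cup\{0\}$ such that: (QZC1) $s(\mathscr X)=0$ iff $\mathscr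 X=\mathbf 0$, and $s(\mathscr X)=1$ iff $\mathscr X$ is rank-one; (QZC2) $s(\mathscr I_{M,N})=M$ whenever $N\ge2$; (QZC3) if $\mathscr X\in\mathbb R^{I_1\times I_2\times1\times\cdots\times1}$ then $s(\mathscr X)$ equals the rank of the corresponding $I_1\times I_2$ matrix; (QZC4) $s(\alpha\mathscr X)=s(\mathscr X)$ for $\alpha\ne0$; (QZC5) $s$ is invariant under mode-permutations; (QZC6) $s(\mathscr Y)\le s(\mathscr X)$ whenever $\mathscr Y$ is a subtensor of $\mathscr X$. *)

(* Defs.v *)
From HB Require Import structures.
From mathcomp Require Import all_boot all_order all_algebra.
From mathcomp Require Import reals.
From mathcomp Require Import fingroup perm.
From Stdlib Require Import Relations.
Set Implicit Arguments. Unset Strict Implicit. Unset Printing Implicit Defensive.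
Import Order.TTheory GRing.Theory Num.Theory.
Local Open Scope ring_scope.

Section Tensors.
Variable R : fieldType.

(* index type of an order-N tensor with dimensions d : multi-indices,
   0-based: mode n ranges over 'I_N, position in mode n over 'I_(d_n). *)
Definition tindex (N : nat) (d : N.-tuple nat) :=
  {dffun forall n : 'I_N, 'I_(tnth d n)}.

Record tensor := Tensor {
  tord : nat;
  tdims : tord.-tuple nat;
  tent : {ffun tindex tdims -> R};
  tvalid : (0 < tord)%N && all (fun k => 0 < k)%N tdims
}.

Definition dim (X : tensor) (n : nat) : nat := nth 0%N (tdims X) n.

(* entry of X at the multi-index given by i : nat -> nat (mode n |-> i n);
   0 if the index is out of range. *)
Definition ent (X : tensor) (i : nat -> nat) : R :=
  if [pick idx : tindex (tdims X) | [forall n, (idx n : nat) == i n]]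
  is Some idx then tent X idx else 0.

Definition valid_idx (X : tensor) (i : nat -> nat) : Prop :=
  forall n, (n < tord X)%N -> (i n < dim X n)%N.

Definition is_zero (X : tensor) : Prop := forall idx, tent X idx = 0.

Definition rank_one (X : tensor) : Prop :=
  exists a : nat -> nat -> R,
    (forall n, (n < tord X)%N -> exists k, (k < dim X n)%N /\ a n k != 0) /\
    (forall i, valid_idx X i -> ent X i = \prod_(n < tord X) a n (i n)).

Definition is_identity (M N : nat) (X : tensor) : Prop :=
  tord X = N /\ (forall n, (n < N)%N -> dim X n = M) /\
  forall i, valid_idx X i ->
    ent X i = if [forall n : 'I_N, i n == i 0%N] then 1 else 0.

Definition scaled (a : R) (X Y : tensor) : Prop :=
  (tdims X : seq nat) = tdims Y /\ forall i, ent Y i = a * ent X i.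

(* Y is the mode-permutation of X by p in S_N:
   y_{i_1..i_N} = x_{i_{p(1)}..i_{p(N)}} (so the dimension of mode p(k) of Y
   is the dimension of mode k of X). *)
Definition permidx (N : nat) (p : {perm 'I_N}) (i : nat -> nat) : nat -> nat :=
  fun k => if @insub _ (fun k => (k < N)%N) 'I_N k is Some k' then i (val (p k'))
           else 0%N.

Definition mode_perm (X Y : tensor) : Prop :=
  tord Y = tord X /\
  exists p : {perm 'I_(tord X)},
    (forall k : 'I_(tord X), dim Y (p k) = dim X k) /\
    forall i, valid_idx Y i -> ent Y i = ent X (permidx p i).

Definition subtensor (Y X : tensor) : Prop :=
  tord Y = tord X /\
  exists f : nat -> nat -> nat,
    (forall n, (n < tord X)%N ->
       (forall j j', (j < j')%N -> (j' < dim Y n)%N -> (f n j < f n j')%N) /\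
       (forall j, (j < dim Y n)%N -> (f n j < dim X n)%N)) /\
    forall i, valid_idx Y i -> ent Y i = ent X (fun n => f n (i n)).

Definition sim_step (X Y : tensor) : Prop :=
  (exists a, a != 0 /\ scaled a X Y) \/ mode_perm X Y.

Definition sim : relation tensor := clos_refl_sym_trans tensor sim_step.

(* the matrix of a tensor whose modes other than p, q all have size 1 *)
Definition flatmx (Y : tensor) (p q : nat) : 'M[R]_(dim Y p, dim Y q) :=
  \matrix_(i < dim Y p, j < dim Y q)
     ent Y (fun n => if n == p then (i : nat) else if n == q then (j : nat) else 0%N).

Definition submatrix_rank (Y : tensor) (k : nat) : Prop :=
  (exists p, (p < tord Y)%N /\
     (forall n, (n < tord Y)%N -> n != p -> dim Y n = 1%N) /\
     ((is_zero Y /\ k = 0%N) \/ (~ is_zero Y /\ k = 1%N)))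
  \/
  (exists p q, (p < q)%N /\ (q < tord Y)%N /\
     (forall n, (n < tord Y)%N -> n != p -> n != q -> dim Y n = 1%N) /\
     k = \rank (flatmx Y p q)).

Definition QZC (s : tensor -> nat) : Prop :=
  (forall X, s X = 0%N <-> is_zero X) /\
  (forall X, s X = 1%N <-> rank_one X) /\
  (forall M N X, (2 <= N)%N -> is_identity M N X -> s X = M) /\
  (forall X, (2 <= tord X)%N ->
     (forall n, (2 <= n)%N -> (n < tord X)%N -> dim X n = 1%N) ->
     s X = \rank (flatmx X 0 1)) /\
  (forall a X Y, a != 0 -> scaled a X Y -> s Y = s X) /\
  (forall X Y, mode_perm X Y -> s Y = s X) /\
  (forall X Y, subtensor Y X -> (s Y <= s X)%N).

Definition S0 (X : tensor) (M : nat) : Prop :=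
  exists Y Z, sim Y X /\ subtensor Z Y /\ is_identity M (tord X) Z.

Definition S1 (X : tensor) (k : nat) : Prop :=
  exists Y Z, sim Y X /\ subtensor Z Y /\ submatrix_rank Z k.

Definition is_max (P : nat -> Prop) (m : nat) : Prop :=
  P m /\ forall k, P k -> (k <= m)%N.

Definition is_min (P : nat -> Prop) (m : nat) : Prop :=
  P m /\ forall k, P k -> (m <= k)%N.

(* mu(X) = min { s(X) | s QZC } : "is_min (mu_set X) m" means mu(X) = m *)
Definition mu_set (X : tensor) (m : nat) : Prop :=
  exists s, QZC s /\ s X = m.

End Tensors.

(* Main.v *)
Require Import Defs.
From HB Require Import structures.
From mathcomp Require Import all_boot all_order all_algebra.
From mathcomp Require Import reals.
From mathcomp Require Import fingroup perm.
From Stdlib Require Import Relations Classical FunctionalExtensionality.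
Set Implicit Arguments. Unset Strict Implicit. Unset Printing Implicit Defensive.
Import Order.TTheory GRing.Theory Num.Theory.
Local Open Scope ring_scope.
Local Notation dim := Defs.dim.

Section Basics.
Variable R : fieldType.
Implicit Types X Y Z A B C : tensor R.

Definition iof N (d : N.-tuple nat) (idx : tindex d) : nat -> nat :=
  fun n => if @insub _ (fun k => (k < N)%N) 'I_N n is Some k then (idx k : nat) else 0%N.

Lemma iofE N (d : N.-tuple nat) (idx : tindex d) (k : 'I_N) : iof idx k = idx k.
Proof.
rewrite /iof; case: insubP => [k' _ Hk|]; last by rewrite ltn_ord.
by have -> : k' = k by apply: val_inj.
Qed.

Lemma ent_idx X (idx : tindex (tdims X)) (i : nat -> nat) :
  (forall n, (idx n : nat) = i n) -> ent X i = tent X idx.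
Proof.
move=> H; rewrite /ent; case: pickP => [idx' /forallP H'|/(_ idx)].
  have -> // : idx' = idx.
  by apply/ffunP => n; apply: val_inj; exact: (etrans (eqP (H' n)) (esym (H n))).
by move/forallP => []; move=> n; rewrite H.
Qed.

Lemma dim_tnth X (n : 'I_(tord X)) : tnth (tdims X) n = dim X n.
Proof. by rewrite /dim (tnth_nth 0%N). Qed.

Lemma valid_ex X (i : nat -> nat) : valid_idx X i ->
  exists idx : tindex (tdims X), forall n, (idx n : nat) = i n.
Proof.
move=> H.
have P : forall n : 'I_(tord X), (i n < tnth (tdims X) n)%N.
  by move=> n; rewrite dim_tnth; apply: H.
exists (@finfun _ (fun n => 'I_(tnth (tdims X) n)) (fun n => Ordinal (P n))).
by move=> n; rewrite ffunE.
Qed.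

Lemma ent_out X (i : nat -> nat) : ~ valid_idx X i -> ent X i = 0.
Proof.
move=> H; rewrite /ent; case: pickP => [idx /forallP H'|//].
exfalso; apply: H => n Hn.
have := H' (Ordinal Hn) => /eqP <-.
by rewrite -(dim_tnth (Ordinal Hn)).
Qed.

Lemma ent_ext X (i j : nat -> nat) : (forall n, (n < tord X)%N -> i n = j n) -> ent X i = ent X j.
Proof.
move=> H; rewrite /ent.
rewrite (@eq_pick _ _ (fun idx : tindex (tdims X) => [forall n, (idx n : nat) == j n])) //.
by move=> idx /=; apply: eq_forallb => n; rewrite H.
Qed.

Lemma is_zeroP X : is_zero X <-> forall i, ent X i = 0.
Proof.
split.
  move=> H i; case: (classic (valid_idx X i)) => Hv; last by apply: ent_out.
  by have [idx Hi] := valid_ex Hv; rewrite (ent_idx Hi).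
move=> H idx; rewrite -(H (iof idx)); symmetry; apply: ent_idx => n; by rewrite iofE.
Qed.

Lemma dim_pos X n : (n < tord X)%N -> (0 < dim X n)%N.
Proof.
move=> Hn; have /andP [_ /allP A] := tvalid X; apply: A.
by apply: mem_nth; rewrite size_tuple.
Qed.

Lemma ord_pos X : (0 < tord X)%N.
Proof. by have /andP [] := tvalid X. Qed.

Definition mkT N (d : N.-tuple nat) (H : (0 < N)%N && all (fun k => 0 < k)%N d)
  (g : (nat -> nat) -> R) : tensor R :=
  @Tensor R N d [ffun idx => g (iof idx)] H.

Lemma ent_mkT N (d : N.-tuple nat) H g (i : nat -> nat) :
  (forall i j, (forall n, (n < N)%N -> i n = j n) -> g i = g j) ->
  valid_idx (@mkT N d H g) i -> ent (mkT H g) i = g i.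
Proof.
move=> Hg Hv; have [idx Hi] := valid_ex Hv.
rewrite (ent_idx Hi) /= ffunE; apply: Hg => n Hn.
by have := iofE idx (Ordinal Hn) => /= ->; rewrite Hi.
Qed.


Definition np N (g h : nat -> nat) :=
  (forall k, (k < N)%N -> (g k < N)%N) /\ (forall k, (k < N)%N -> (h k < N)%N) /\
  (forall k, (k < N)%N -> h (g k) = k) /\ (forall k, (k < N)%N -> g (h k) = k).

Lemma np_sym N g h : np N g h -> np N h g.
Proof. by case=> [? [? [? ?]]]; split. Qed.

Definition mpn X Y (g : nat -> nat) :=
  tord Y = tord X /\ (forall k, (k < tord X)%N -> dim Y (g k) = dim X k) /\
  (forall i, valid_idx Y i -> ent Y i = ent X (fun n => i (g n))).

Definition pf N (s : {perm 'I_N}) (n : nat) : nat :=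
  if @insub _ (fun k => (k < N)%N) 'I_N n is Some k then (s k : nat) else n.

Lemma pfE N (s : {perm 'I_N}) (k : 'I_N) : pf s k = s k.
Proof.
rewrite /pf; case: insubP => [k' _ Hk|]; last by rewrite ltn_ord.
by have -> : k' = k by apply: val_inj.
Qed.

Lemma permidxE N (s : {perm 'I_N}) (i : nat -> nat) (k : 'I_N) : permidx s i k = i (s k).
Proof.
rewrite /permidx; case: insubP => [k' _ Hk|]; last by rewrite ltn_ord.
by have -> : k' = k by apply: val_inj.
Qed.

Lemma np_pf N (s : {perm 'I_N}) : np N (pf s) (pf (s^-1)%g).
Proof.
split; [|split; [|split]] => k Hk.
- by rewrite -[k]/(nat_of_ord (Ordinal Hk)) pfE.
- by rewrite -[k]/(nat_of_ord (Ordinal Hk)) pfE.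
- by rewrite -[k]/(nat_of_ord (Ordinal Hk)) pfE pfE permK.
- by rewrite -[k]/(nat_of_ord (Ordinal Hk)) pfE pfE permKV.
Qed.

Lemma mode_permP X Y : mode_perm X Y -> exists g h, np (tord X) g h /\ mpn X Y g.
Proof.
case=> Ht [s [Hd He]]; exists (pf s), (pf (s^-1)%g); split; first exact: np_pf.
split => //; split.
  by move=> k Hk; rewrite -[k]/(nat_of_ord (Ordinal Hk)) pfE Hd.
move=> i Hv; rewrite He //; apply: ent_ext => n Hn.
by rewrite -[n]/(nat_of_ord (Ordinal Hn)) pfE permidxE.
Qed.

Lemma mpn_mode_perm X Y g h : np (tord X) g h -> mpn X Y g -> mode_perm X Y.
Proof.
case=> Hg [Hh [Hhg Hgh]] [Ht [Hd He]].
pose f (k : 'I_(tord X)) : 'I_(tord X) := Ordinal (Hg k (ltn_ord k)).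
have finj : injective f.
  move=> k1 k2 /(congr1 val) /= E; apply: val_inj => /=.
  by rewrite -(Hhg k1 (ltn_ord k1)) E Hhg.
split => //; exists (perm finj); split.
  by move=> k; rewrite permE /= Hd.
move=> i Hv; rewrite He //; apply: ent_ext => n Hn.
by rewrite -[n]/(nat_of_ord (Ordinal Hn)) permidxE permE.
Qed.

Lemma valid_sameT X Y i : tord X = tord Y -> (forall n, (n < tord X)%N -> dim X n = dim Y n) ->
  valid_idx X i -> valid_idx Y i.
Proof. by move=> Ht Hd Hv n Hn; rewrite -Hd ?Hv // Ht. Qed.

Lemma scaled_dims a X Y : scaled a X Y -> tord Y = tord X /\ forall n, dim Y n = dim X n.
Proof.
case=> E _; split; last by move=> n; rewrite /dim E.
by rewrite -(size_tuple (tdims X)) -(size_tuple (tdims Y)) E.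
Qed.

Lemma mpn_sym X Y g h : np (tord X) g h -> mpn X Y g -> mpn Y X h.
Proof.
case=> Hg [Hh [Hhg Hgh]] [Ht [Hd He]]; split => //; rewrite Ht; split.
  by move=> k Hk; rewrite -Hd ?Hgh ?Hh.
move=> i Hv; rewrite He; last first.
  move=> n; rewrite Ht => Hn; rewrite -{2}(Hgh n Hn) Hd ?Hh //; exact: Hv (Hh n Hn).
by apply: ent_ext => n Hn; rewrite Hhg.
Qed.

Lemma sim_step_sym X Y : sim_step X Y -> sim_step Y X.
Proof.
case=> [[a [Ha [E He]]]|Hp].
  left; exists a^-1; split; first by rewrite invr_eq0.
  by split => // i; rewrite He mulrA mulVf ?mul1r.
right; have [g [h [Hnp Hm]]] := mode_permP Hp.
apply: (@mpn_mode_perm _ _ h g); last exact: mpn_sym Hnp Hm.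
by case: Hm => -> _; apply: np_sym.
Qed.

Lemma scale_ex a X : exists Y, scaled a X Y.
Proof.
exists (mkT (tvalid X) (fun i => a * ent X i)); split => // i.
case: (classic (valid_idx X i)) => Hv.
  rewrite ent_mkT //; move=> i1 i2 H; congr (_ * _); exact: ent_ext.
by rewrite !ent_out ?mulr0.
Qed.

Lemma perm_ex X g h : np (tord X) g h -> exists Y, mpn X Y g.
Proof.
move=> [Hg [Hh [Hhg Hgh]]].
pose d := [tuple dim X (h k) | k < tord X].
have Hd : forall n, (n < tord X)%N -> nth 0%N d n = dim X (h n).
  by move=> n Hn; rewrite -[n]/(nat_of_ord (Ordinal Hn)) nth_mktuple.
have V : (0 < tord X)%N && all (fun k => 0 < k)%N d.
  rewrite ord_pos /=; apply/allP => x /(nthP 0%N) [n]; rewrite size_tuple => Hn <-.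
  rewrite card_ord in Hn; rewrite /= Hd //; apply: dim_pos; exact: Hh.
exists (mkT V (fun i => ent X (fun n => i (g n)))); split => //; split.
  by move=> k Hk; rewrite /dim /= Hd ?Hhg ?Hg.
move=> i Hv; rewrite ent_mkT //.
by move=> i1 i2 H; apply: ent_ext => n Hn; apply: H; apply: Hg.
Qed.


Lemma sim_inv (P : tensor R -> Prop) :
  (forall X Y, sim_step X Y -> P X -> P Y) -> forall X Y, sim X Y -> (P X <-> P Y).
Proof.
move=> H X Y; elim => {X Y} [X Y st | X | X Y _ IH | X Y Z _ IH1 _ IH2].
- by split; [exact: H | apply: H; exact: sim_step_sym].
- by [].
- by tauto.
- by tauto.
Qed.

Lemma sim_sym X Y : sim X Y -> sim Y X.
Proof. exact: rst_sym. Qed.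

Lemma sim_trans X Y Z : sim X Y -> sim Y Z -> sim X Z.
Proof. exact: rst_trans. Qed.

Lemma sim_tord X Y : sim X Y -> tord X = tord Y.
Proof.
move=> H.
have S : forall A B : tensor R, sim_step A B -> tord A = tord X -> tord B = tord X.
  move=> A B [[a [_ Hs]]|Hm].
    by have [-> _] := scaled_dims Hs.
  by have [g [h [_ [-> _]]]] := mode_permP Hm.
by have [E _] := @sim_inv (fun T => tord T = tord X) S X Y H; rewrite (E erefl).
Qed.

Lemma sim_zero X Y : sim X Y -> is_zero X -> is_zero Y.
Proof.
move=> H.
have S : forall A B : tensor R, sim_step A B -> is_zero A -> is_zero B.
move=> A B [[a [_ [_ He]]]|/mode_permP [g [h [_ [_ [_ He]]]]]] /is_zeroP Z; apply/is_zeroP => i.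
  by rewrite He Z mulr0.
case: (classic (valid_idx B i)) => Hv; last by apply: ent_out.
by rewrite He.
by have [] := sim_inv S H.
Qed.

Lemma incr_ge (f : nat -> nat) J : (forall j j', (j < j')%N -> (j' < J)%N -> (f j < f j')%N) ->
  forall j, (j < J)%N -> (j <= f j)%N.
Proof.
move=> H; elim => [//|j IH] Hj.
have := H j j.+1 (ltnSn j) Hj; have := IH (ltnW Hj).
move=> A B; exact: leq_ltn_trans A B.
Qed.

Lemma incr_le (f : nat -> nat) J I : (forall j j', (j < j')%N -> (j' < J)%N -> (f j < f j')%N) ->
  (forall j, (j < J)%N -> (f j < I)%N) -> (J <= I)%N.
Proof.
move=> H1 H2; case: J H1 H2 => [//|J] H1 H2.
have := incr_ge H1 (ltnSn J); have := H2 J (ltnSn J).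
move=> A B; exact: leq_ltn_trans B A.
Qed.

Lemma sub_dim Y X n : subtensor Y X -> (n < tord X)%N -> (dim Y n <= dim X n)%N.
Proof. by case=> _ [f [Hf _]] Hn; have [A B] := Hf n Hn; exact: incr_le A B. Qed.

Lemma sub_refl X : subtensor X X.
Proof.
split=> //; exists (fun _ j => j); split; last by move=> i _; apply: ent_ext.
by move=> n _; split.
Qed.

Lemma sub_trans Z Y X : subtensor Z Y -> subtensor Y X -> subtensor Z X.
Proof.
case=> E1 [f1 [Hf1 He1]] [E2 [f2 [Hf2 He2]]]; split; first by rewrite E1.
exists (fun n j => f2 n (f1 n j)); split.
  move=> n Hn; have Hn' : (n < tord Y)%N by rewrite E2.
  have [A1 B1] := Hf1 n Hn'.
  have [A2 B2] := Hf2 n Hn.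
  split; first by move=> j j' H H'; apply: A2; [apply: A1 | apply: B1].
  by move=> j Hj; apply: B2; apply: B1.
move=> i Hv; rewrite He1 // He2 //.
move=> n Hn; case: (Hf1 n Hn) => _; apply; apply: Hv; by rewrite E1.
Qed.

Lemma sub_scale a A B (A' B' : tensor R) : subtensor A B -> scaled a A A' -> scaled a B B' -> subtensor A' B'.
Proof.
move=> [E [f [Hf He]]] HA HB.
have [tA dA] := scaled_dims HA; have [tB dB] := scaled_dims HB.
case: HA => _ eA; case: HB => _ eB.
split; first by rewrite tA tB.
exists f; split.
  by move=> n; rewrite tB dA dB => Hn; apply: Hf.
move=> i Hv; rewrite eA eB He //.
by move=> n Hn; rewrite -dA; apply: Hv; rewrite tA.
Qed.

Lemma sub_perm g h A B (A' B' : tensor R) : subtensor A B -> np (tord A) g h -> mpn A A' g -> mpn B B' g ->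
  subtensor A' B'.
Proof.
move=> [E [f [Hf He]]] [Hg [Hh [Hhg Hgh]]] [tA [dA eA]] [tB [dB eB]].
split; first by rewrite tA tB.
have dA' : forall n, (n < tord A)%N -> dim A' n = dim A (h n).
  by move=> n Hn; rewrite -{1}(Hgh n Hn) dA // Hh.
have dB' : forall n, (n < tord A)%N -> dim B' n = dim B (h n).
  by move=> n Hn; rewrite -{1}(Hgh n Hn) dB // -E Hh.
exists (fun n j => f (h n) j); split.
  move=> n; rewrite tB -E => Hn; rewrite dA' // dB' //.
  by apply: Hf; rewrite -E Hh.
move=> i Hv.
have Hv1 : valid_idx A (fun n => i (g n)).
  by move=> n Hn; rewrite -dA //; apply: Hv; rewrite tA Hg.
rewrite eA // He // eB; last first.
  move=> n; rewrite tB -E => Hn; rewrite dB' //.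
  have Hhn : (h n < tord B)%N by rewrite -E Hh.
  case: (Hf (h n) Hhn) => _; apply; rewrite -dA' //; apply: Hv; by rewrite tA.
by apply: ent_ext => n Hn; rewrite Hhg // E.
Qed.

Lemma step_push Y (Y' : tensor R) X : sim_step Y Y' -> subtensor Y X ->
  exists X', sim_step X X' /\ subtensor Y' X'.
Proof.
move=> [[a [Ha HY]]|Hm] Hs.
  have [X' HX] := scale_ex a X; exists X'; split; first by left; exists a.
  exact: sub_scale Hs HY HX.
have [g [h [Hnp HY]]] := mode_permP Hm.
have Hnp' : np (tord X) g h by case: Hs => <-.
have [X' HX] := perm_ex Hnp'; exists X'; split; first by right; exact: mpn_mode_perm Hnp' HX.
exact: sub_perm Hs Hnp HY HX.
Qed.

Lemma step_pull Y X Z : sim_step Y X -> subtensor Z Y ->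
  exists Z', sim_step Z Z' /\ subtensor Z' X.
Proof.
move=> [[a [Ha HY]]|Hm] Hs.
  have [Z' HZ] := scale_ex a Z; exists Z'; split; first by left; exists a.
  exact: sub_scale Hs HZ HY.
have [g [h [Hnp HY]]] := mode_permP Hm.
have Hnp' : np (tord Z) g h by case: Hs => ->.
have [Z' HZ] := perm_ex Hnp'; exists Z'; split; first by right; exact: mpn_mode_perm Hnp' HZ.
exact: sub_perm Hs Hnp' HZ HY.
Qed.

Lemma sim_push Y (Y' : tensor R) X : sim Y Y' -> subtensor Y X -> exists X', sim X X' /\ subtensor Y' X'.
Proof.
move=> H; move: X.
suff : (forall X, subtensor Y X -> exists X', sim X X' /\ subtensor Y' X') /\
       (forall X, subtensor Y' X -> exists X', sim X X' /\ subtensor Y X') by case=> A0 _; apply: A0.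
elim: H => {Y Y'} [A B st | A | A B _ [IH1 IH2] | A B C _ [IH1 IH2] _ [IH3 IH4]].
- split=> W Hs.
    by have [X' [s1 s2]] := step_push st Hs; exists X'; split => //; apply: rst_step.
  by have [X' [s1 s2]] := step_push (sim_step_sym st) Hs; exists X'; split => //; apply: rst_step.
- by split=> W Hs; exists W; split => //; apply: rst_refl.
- by split.
- split=> W Hs.
    have [X1 [s1 h1]] := IH1 W Hs; have [X2 [s2 h2]] := IH3 X1 h1.
    by exists X2; split => //; exact: sim_trans s1 s2.
  have [X1 [s1 h1]] := IH4 W Hs; have [X2 [s2 h2]] := IH2 X1 h1.
  by exists X2; split => //; exact: sim_trans s1 s2.
Qed.

Lemma sim_pull Y X Z : sim Y X -> subtensor Z Y -> exists Z', sim Z Z' /\ subtensor Z' X.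
Proof.
move=> H; move: Z.
suff : (forall Z, subtensor Z Y -> exists Z', sim Z Z' /\ subtensor Z' X) /\
       (forall Z, subtensor Z X -> exists Z', sim Z Z' /\ subtensor Z' Y) by case=> A0 _; apply: A0.
elim: H => {Y X} [A B st | A | A B _ [IH1 IH2] | A B C _ [IH1 IH2] _ [IH3 IH4]].
- split=> Z Hs.
    by have [Z' [s1 s2]] := step_pull st Hs; exists Z'; split => //; apply: rst_step.
  by have [Z' [s1 s2]] := step_pull (sim_step_sym st) Hs; exists Z'; split => //; apply: rst_step.
- by split=> Z Hs; exists Z; split => //; apply: rst_refl.
- by split.
- split=> Z Hs.
    have [Z1 [s1 h1]] := IH1 Z Hs; have [Z2 [s2 h2]] := IH3 Z1 h1.
    by exists Z2; split => //; exact: sim_trans s1 s2.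
  have [Z1 [s1 h1]] := IH4 Z Hs; have [Z2 [s2 h2]] := IH2 Z1 h1.
  by exists Z2; split => //; exact: sim_trans s1 s2.
Qed.

End Basics.

Section Mx.
Variable R : fieldType.

Definition mxr m n (F : nat -> nat -> R) := \rank (\matrix_(i < m, j < n) F i j).

Lemma mxr_ext m n F G : (forall x y, (x < m)%N -> (y < n)%N -> F x y = G x y) ->
  mxr m n F = mxr m n G.
Proof.
move=> H; rewrite /mxr; congr (\rank _); apply/matrixP => i j; rewrite !mxE; exact: H.
Qed.

Lemma mxr_tr m n F : mxr m n F = mxr n m (fun y x => F x y).
Proof.
rewrite /mxr -mxrank_tr; congr (\rank _); apply/matrixP => i j; by rewrite !mxE.
Qed.

Lemma mxr_row m n F : (mxr m n F <= m)%N.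
Proof. exact: rank_leq_row. Qed.

Lemma mxr_col m n F : (mxr m n F <= n)%N.
Proof. exact: rank_leq_col. Qed.

Lemma mxrank_mxsub m n m' n' (f : 'I_m' -> 'I_m) (g : 'I_n' -> 'I_n) (A : 'M[R]_(m, n)) :
  (\rank (mxsub f g A) <= \rank A)%N.
Proof.
rewrite mxsubrc; apply: leq_trans (mxrankS (rowsub_sub _ _)) _.
have -> : colsub g A = (rowsub g A^T)^T by apply/matrixP => i j; rewrite !mxE.
by rewrite mxrank_tr -[X in (_ <= X)%N]mxrank_tr; apply: mxrankS; apply: rowsub_sub.
Qed.

Lemma mxr_sub m n m' n' F (a b : nat -> nat) :
  (forall x, (x < m')%N -> (a x < m)%N) -> (forall y, (y < n')%N -> (b y < n)%N) ->
  (mxr m' n' (fun x y => F (a x) (b y)) <= mxr m n F)%N.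
Proof.
move=> Ha Hb.
pose f (x : 'I_m') : 'I_m := Ordinal (Ha x (ltn_ord x)).
pose g (y : 'I_n') : 'I_n := Ordinal (Hb y (ltn_ord y)).
rewrite /mxr; have -> : \matrix_(i < m', j < n') F (a i) (b j) =
   mxsub f g (\matrix_(i < m, j < n) F i j) by apply/matrixP => i j; rewrite !mxE.
exact: mxrank_mxsub.
Qed.

Lemma mxr_scale m n F a : a != 0 -> mxr m n (fun x y => a * F x y) = mxr m n F.
Proof.
move=> Ha; rewrite /mxr -(mxrank_scale_nz (\matrix_(i < m, j < n) F i j) Ha); congr (\rank _).
by apply/matrixP => i j; rewrite !mxE.
Qed.

Lemma mxr_id m : mxr m m (fun x y => if x == y then 1 else 0) = m.
Proof.
rewrite /mxr; have -> : \matrix_(i < m, j < m) (if (i:nat) == j then (1:R) else 0) = 1%:M.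
  apply/matrixP => i j; rewrite !mxE.
  by case: eqP => [/val_inj -> |]; rewrite ?eqxx //; case: eqP => // ->.
exact: mxrank1.
Qed.

Lemma mxr_eq0 m n F : mxr m n F = 0%N <-> (forall x y, (x < m)%N -> (y < n)%N -> F x y = 0).
Proof.
rewrite /mxr; split.
  move/eqP; rewrite mxrank_eq0 => /eqP E x y Hx Hy.
  by have := congr1 (fun M : 'M[R]_(m, n) => M (Ordinal Hx) (Ordinal Hy)) E; rewrite !mxE.
move=> H; apply/eqP; rewrite mxrank_eq0; apply/eqP/matrixP => i j; rewrite !mxE; exact: H.
Qed.

Lemma mxr_outer m n F (u v : nat -> R) :
  (forall x y, (x < m)%N -> (y < n)%N -> F x y = u x * v y) -> (mxr m n F <= 1)%N.
Proof.
move=> H; rewrite /mxr.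
have -> : \matrix_(i < m, j < n) F i j = (\col_(i < m) u i) *m (\row_(j < n) v j).
  apply/matrixP => i j; rewrite !mxE big_ord1 !mxE; exact: H.
exact: leq_trans (mxrankM_maxl _ _) (rank_leq_col _).
Qed.

Lemma rank1_aux m n r (E : r = 1%N) (cb : 'M[R]_(m, r)) (rb : 'M[R]_(r, n)) :
  exists (u v : nat -> R), forall (x : 'I_m) (y : 'I_n), (cb *m rb) x y = u x * v y.
Proof.
subst r.
exists (fun x => if insub x is Some x' then cb x' 0 else 0),
       (fun y => if insub y is Some y' then rb 0 y' else 0).
move=> x y; rewrite !mxE big_ord1.
by rewrite (valK x) (valK y).
Qed.

Lemma mxr_one m n F : mxr m n F = 1%N ->
  exists (u v : nat -> R), forall x y, (x < m)%N -> (y < n)%N -> F x y = u x * v y.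
Proof.
rewrite /mxr => E; have [u [v H]] := rank1_aux E (col_base (\matrix_(i < m, j < n) F i j))
   (row_base (\matrix_(i < m, j < n) F i j)).
exists u, v => x y Hx Hy; have := H (Ordinal Hx) (Ordinal Hy).
by rewrite mulmx_base mxE.
Qed.

End Mx.

Section Flat.
Variable R : fieldType.
Implicit Types X Y Z W A B C : tensor R.

Definition pqidx (p q x y : nat) : nat -> nat :=
  fun n => if n == p then x else if n == q then y else 0%N.

Lemma flatE Y p q : \rank (flatmx Y p q) = mxr (dim Y p) (dim Y q) (fun x y => ent Y (pqidx p q x y)).
Proof. by []. Qed.

Lemma pqidx_valid Y p q x y : (x < dim Y p)%N -> (y < dim Y q)%N -> valid_idx Y (pqidx p q x y).
Proof.
move=> Hx Hy n Hn; rewrite /pqidx; case: eqP => [->//|_]; case: eqP => [->//|_]; exact: dim_pos.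
Qed.

Lemma flat_perm Z W g h p q : np (tord Z) g h -> mpn Z W g -> p != q ->
  (p < tord Z)%N -> (q < tord Z)%N ->
  \rank (flatmx W (g p) (g q)) = \rank (flatmx Z p q).
Proof.
move=> [Hg [Hh [Hhg Hgh]]] [tW [dW eW]] Hpq Hp Hq; rewrite !flatE !dW //.
apply: mxr_ext => x y Hx Hy.
rewrite eW; last by apply: pqidx_valid; rewrite dW.
apply: ent_ext => m Hm; rewrite /pqidx.
have E : forall a, (a < tord Z)%N -> (g m == g a) = (m == a).
  move=> a Ha; apply/eqP/eqP => [E|->//].
  by rewrite -(Hhg m Hm) E Hhg.
by rewrite !E.
Qed.

Lemma flat_swap Z p q : p != q -> \rank (flatmx Z q p) = \rank (flatmx Z p q).
Proof.
move=> Hpq; rewrite !flatE mxr_tr; apply: mxr_ext => x y _ _; congr (ent Z _).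
apply: functional_extensionality => n; rewrite /pqidx.
case: (n =P q) => [->|Hnq]; case: (n =P p) => [Hnp|Hnp] //.
- by case: (q =P p) => // E; rewrite E eqxx in Hpq.
- by case: (q =P p) => // E; rewrite E eqxx in Hpq.
Qed.

Lemma flat_scale a Z W p q : a != 0 -> scaled a Z W -> \rank (flatmx W p q) = \rank (flatmx Z p q).
Proof.
move=> Ha HS; have [_ dW] := scaled_dims HS; case: HS => _ eW.
rewrite !flatE !dW -(mxr_scale (dim Z p) (dim Z q) (fun x y => ent Z (pqidx p q x y)) Ha).
by apply: mxr_ext => x y _ _; rewrite eW.
Qed.

Lemma mpn_dim Z W g h n : np (tord Z) g h -> mpn Z W g -> (n < tord Z)%N -> dim W n = dim Z (h n).
Proof. by move=> [_ [Hh [_ Hgh]]] [_ [dW _]] Hn; rewrite -{1}(Hgh n Hn) dW // Hh. Qed.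

Lemma smr_step Z W k : sim_step Z W -> submatrix_rank Z k -> submatrix_rank W k.
Proof.
move=> st.
have zi : is_zero Z <-> is_zero W.
  by split; apply: sim_zero; [apply: rst_step | apply: rst_sym; apply: rst_step].
case: st => [[a [Ha HS]]|Hm].
  have [tW dW] := scaled_dims HS.
  case=> [[p [Hp [Hd Hk]]]|[p [q [Hpq [Hq [Hd Hk]]]]]].
    left; exists p; rewrite tW; split => //; split; last tauto.
    by move=> n Hn H; rewrite dW; apply: Hd.
  right; exists p, q; rewrite tW; split => //; split => //; split.
    by move=> n Hn H1 H2; rewrite dW; apply: Hd.
  by rewrite Hk (flat_scale p q Ha HS).
have [g [h [Hnp HW]]] := mode_permP Hm.
have tW : tord W = tord Z by case: HW.
have [Hg [Hh [Hhg Hgh]]] := Hnp.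
have ginj : forall a b, (a < tord Z)%N -> (b < tord Z)%N -> (g a == g b) = (a == b).
  move=> a b Ha Hb; apply/eqP/eqP => [E|->//].
  by rewrite -(Hhg a Ha) E Hhg.
case=> [[p [Hp [Hd Hk]]]|[p [q [Hpq [Hq [Hd Hk]]]]]].
  left; exists (g p); rewrite tW; split; first exact: Hg.
  split; last tauto.
  move=> n Hn Hne; rewrite (mpn_dim Hnp HW Hn); apply: Hd; first exact: Hh.
  by apply: contra Hne => /eqP <-; rewrite Hgh.
have Hp : (p < tord Z)%N by apply: ltn_trans Hpq Hq.
have Hpq' : p != q by rewrite neq_ltn Hpq.
have Hdims : forall n, (n < tord Z)%N -> n != g p -> n != g q -> dim W n = 1%N.
  move=> n Hn H1 H2; rewrite (mpn_dim Hnp HW Hn); apply: Hd; first exact: Hh.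
    by apply: contra H1 => /eqP <-; rewrite Hgh.
  by apply: contra H2 => /eqP <-; rewrite Hgh.
right; rewrite tW.
have Hne : g p != g q by rewrite ginj.
case: (ltngtP (g p) (g q)) => [Hlt|Hgt|Heq]; last by rewrite Heq eqxx in Hne.
  exists (g p), (g q); split => //; split; first exact: Hg.
  split; first by move=> n Hn; apply: Hdims.
  by rewrite Hk (flat_perm Hnp HW Hpq' Hp Hq).
exists (g q), (g p); split => //; split; first exact: Hg.
split; first by move=> n Hn H1 H2; apply: Hdims.
by rewrite Hk (@flat_swap W (g p) (g q) Hne) (flat_perm Hnp HW Hpq' Hp Hq).
Qed.

Lemma smr_sim Z W k : sim Z W -> submatrix_rank Z k -> submatrix_rank W k.
Proof.
move=> H; have S : forall A B, sim_step A B -> submatrix_rank A k -> submatrix_rank B k.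
  by move=> A B st; apply: smr_step.
by have [] := sim_inv S H.
Qed.

End Flat.

Section Special.
Variable R : fieldType.
Implicit Types X Y Z W A B C : tensor R.

Lemma ord1_rank_one X : tord X = 1%N -> ~ is_zero X -> rank_one X.
Proof.
move=> E NZ; exists (fun _ k => ent X (fun _ => k)); split.
  move=> n Hn; case: (classic (exists i, ent X i != 0)) => [[i Hi]|H].
    exists (i 0%N); split.
      case: (classic (valid_idx X i)) => Hv; last by rewrite ent_out ?eqxx in Hi.
      have : n = 0%N by move: Hn; rewrite E; case: n.
      by move=> ->; apply: Hv; rewrite E.
    rewrite (ent_ext (j := i)) // => m; rewrite E; case: m => //.
  exfalso; apply: NZ; apply/is_zeroP => i; apply/eqP; apply: contraT => Hi.
  by exfalso; apply: H; exists i.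
move=> i Hv; have -> : \prod_(n < tord X) ent X (fun=> i n) = \prod_(n < 1) ent X (fun=> i n).
  by move: (tord X) E => t ->.
by rewrite big_ord1; apply: ent_ext => m; rewrite E; case: m.
Qed.

Lemma id_dims M N X : is_identity M N X -> tord X = N /\ forall n, (n < tord X)%N -> dim X n = M.
Proof. by case=> E [Hd _]; split => // n; rewrite E; apply: Hd. Qed.

Lemma id_M_pos M N X : is_identity M N X -> (0 < M)%N.
Proof.
move=> /id_dims [E Hd]; rewrite -(Hd 0%N (ord_pos X)); exact: dim_pos (ord_pos X).
Qed.

Lemma id_ent0 M N X : is_identity M N X -> ent X (fun _ => 0%N) = 1.
Proof.
move=> HI; have [E Hd] := id_dims HI; have Mp := id_M_pos HI; case: HI => _ [_ He].
rewrite He; first by case: forallP => // H; exfalso; apply: H => n.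
by move=> n Hn; rewrite Hd.
Qed.

Lemma id_nonzero M N X : is_identity M N X -> ~ is_zero X.
Proof. by move=> HI /is_zeroP Z; have := id_ent0 HI; rewrite Z => /eqP; rewrite eq_sym oner_eq0. Qed.

Lemma id_one_r1 N X : is_identity 1 N X -> rank_one X.
Proof.
move=> HI; have [E Hd] := id_dims HI; case: HI => _ [_ He].
exists (fun _ _ => 1); split.
  by move=> n Hn; exists 0%N; rewrite Hd // oner_eq0.
move=> i Hv; rewrite He // big1 //; case: forallP => // H; exfalso; apply: H => n.
have h0 : forall m, (m < N)%N -> i m = 0%N.
  by move=> m Hm; have := Hv m; rewrite E Hd ?E // ltnS leqn0 => /(_ Hm) /eqP.
by rewrite !h0 // -E ord_pos.
Qed.

Lemma id_not_r1 M N X : (2 <= N)%N -> (2 <= M)%N -> is_identity M N X -> ~ rank_one X.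
Proof.
move=> HN HM HI; have [E Hd] := id_dims HI; case: HI => _ [_ He] [a [_ Ha]].
have V : forall i : nat -> nat, (forall n, i n <= 1)%N -> valid_idx X i.
  by move=> i Hi n Hn; rewrite Hd //; apply: leq_ltn_trans (Hi n) HM.
have B0 : \prod_(n < tord X) a n 0%N != 0.
  rewrite -(Ha (fun _ => 0%N)); last exact: V.
  rewrite He; last exact: V.
  by case: forallP => [_|H]; [rewrite oner_eq0 | exfalso; apply: H].
have A0 : forall n : 'I_(tord X), a n 0%N != 0.
  by move=> n; move/prodf_neq0: B0 => /(_ n isT).
have B1 : \prod_(n < tord X) a n 1%N != 0.
  rewrite -(Ha (fun _ => 1%N)); last exact: V.
  rewrite He; last exact: V.
  by case: forallP => [_|H]; [rewrite oner_eq0 | exfalso; apply: H].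
have A1 : forall n : 'I_(tord X), a n 1%N != 0.
  by move=> n; move/prodf_neq0: B1 => /(_ n isT).
pose i2 := fun n : nat => if n == 0%N then 0%N else 1%N.
have : \prod_(n < tord X) a n (i2 n) != 0.
  apply/(@prodf_neq0 _ _ predT (fun n : 'I_(tord X) => a n (i2 n))) => n _; rewrite /i2; case: ifP => _; [apply: A0 | apply: A1].
rewrite -Ha; last by apply: V => n; rewrite /i2; case: eqP.
rewrite He; last by apply: V => n; rewrite /i2; case: eqP.
case: forallP => [H|_]; last by rewrite eqxx.
by have := H (Ordinal HN); rewrite /i2.
Qed.

Lemma id2_rank M X : is_identity M 2 X -> \rank (flatmx X 0 1) = M.
Proof.
move=> HI; have [E Hd] := id_dims HI; case: HI => _ [_ He].
rewrite flatE !Hd ?E // -[RHS](mxr_id R M); apply: mxr_ext => x y Hx Hy.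
rewrite He; last by apply: pqidx_valid; rewrite Hd ?E.
congr (if _ then _ else _); apply/forallP/eqP => [H|->].
  by have := H (Ordinal (isT : (1 < 2)%N)); rewrite /pqidx /= => /eqP ->.
by case=> [[|[|n]] Hn] //; rewrite /pqidx.
Qed.

Lemma sub_nonzero Y X : subtensor Y X -> ~ is_zero Y -> ~ is_zero X.
Proof.
move=> [E [f [Hf He]]] NY /is_zeroP ZX; apply: NY; apply/is_zeroP => i.
case: (classic (valid_idx Y i)) => Hv; last by apply: ent_out.
by rewrite He.
Qed.

Lemma sub_rank_one Y X : subtensor Y X -> rank_one X -> is_zero Y \/ rank_one Y.
Proof.
move=> [E [f [Hf He]]] [a [_ Ha]].
case: (classic (is_zero Y)) => NY; [by left | right].
have [i [Hv Hi]] : exists i, valid_idx Y i /\ ent Y i != 0.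
  apply: NNPP => H; apply: NY; apply/is_zeroP => i.
  case: (classic (valid_idx Y i)) => Hv; last by apply: ent_out.
  by apply/eqP; apply: contraT => Hi; exfalso; apply: H; exists i.
have Vf : forall j, valid_idx Y j -> valid_idx X (fun n => f n (j n)).
  by move=> j Hj n Hn; case: (Hf n Hn) => _; apply; apply: Hj; rewrite E.
exists (fun n k => a n (f n k)); split; last first.
  move=> j Hj; rewrite He //; rewrite Ha; last exact: Vf.
  by move: (tord Y) E => t ->.
move=> n Hn; exists (i n); split; first exact: Hv.
have Hn' : (n < tord X)%N by rewrite -E.
move: Hi; rewrite He //; rewrite Ha; last exact: Vf.
by move=> /prodf_neq0 /(_ (Ordinal Hn')); apply.
Qed.

End Special.

Section ML.
Variable R : fieldType.
Implicit Types X Y Z W A B C : tensor R.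

Definition ml X := (2 <= tord X)%N /\ forall n, (2 <= n)%N -> (n < tord X)%N -> dim X n = 1%N.

Lemma prod2 N (F : nat -> R) : (2 <= N)%N ->
  \prod_(n < N) F n = F 0%N * F 1%N * \prod_(n < N - 2) F n.+2.
Proof.
case: N => [|[|N]] // _; rewrite !big_ord_recl mulrA subSS subSS subn0 /=.
by congr (_ * _); apply: eq_bigr => i _.
Qed.

Lemma ml_ent X i : ml X -> valid_idx X i -> ent X i = ent X (pqidx 0 1 (i 0%N) (i 1%N)).
Proof.
move=> [H2 H1] Hv; apply: ent_ext => n Hn; rewrite /pqidx.
case: n Hn => [|[|n]] Hn //=.
by have := Hv _ Hn; rewrite H1 // ltnS leqn0 => /eqP.
Qed.

Lemma ml_zero X : ml X -> (is_zero X <-> \rank (flatmx X 0 1) = 0%N).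
Proof.
move=> Hml; rewrite flatE mxr_eq0; split.
  by move/is_zeroP => Z x y _ _.
move=> H; apply/is_zeroP => i.
case: (classic (valid_idx X i)) => Hv; last by apply: ent_out.
rewrite ml_ent //; apply: H; apply: Hv; case: Hml => H2 _; exact: leq_ltn_trans H2.
Qed.

Lemma ml_r1 X : ml X -> rank_one X -> (\rank (flatmx X 0 1) <= 1)%N.
Proof.
move=> [H2 H1] [a [_ Ha]]; rewrite flatE.
apply: (@mxr_outer _ _ _ _ (fun x => a 0%N x * \prod_(n < tord X - 2) a n.+2 0%N) (fun y => a 1%N y)).
move=> x y Hx Hy; rewrite Ha; last by apply: pqidx_valid.
by rewrite (prod2 (fun n => a n (pqidx 0 1 x y n))) // mulrAC.
Qed.

Lemma ml_one X : ml X -> \rank (flatmx X 0 1) = 1%N -> rank_one X.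
Proof.
move=> Hml E; have [H2 H1] := Hml; move: E; rewrite flatE => E.
have [u [v Huv]] := mxr_one E.
have [x [y [Hx [Hy Hxy]]]] : exists x y, (x < dim X 0)%N /\ (y < dim X 1)%N /\
     ent X (pqidx 0 1 x y) != 0.
  apply: NNPP => H; move: E; rewrite (proj2 (mxr_eq0 _ _ _)) //.
  move=> x y Hx Hy; apply/eqP; apply: contraT => Hn; exfalso; apply: H.
  by exists x, y.
exists (fun n k => if n == 0%N then u k else if n == 1%N then v k else 1); split.
  move: Hxy; rewrite Huv // mulf_eq0 negb_or => /andP [Hu Hv].
  move=> n Hn; case: n Hn => [|[|n]] Hn /=.
  - by exists x.
  - by exists y.
  - by exists 0%N; rewrite dim_pos // oner_eq0.
move=> i Hv; rewrite ml_ent // Huv; last by apply: Hv; exact: leq_ltn_trans H2.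
  by rewrite (prod2 (fun n : nat => if n == 0%N then u (i n) else if n == 1%N then v (i n) else 1)) //= big1 ?mulr1.
by apply: Hv; exact: ltn_trans H2.
Qed.

End ML.

Section Main.
Variable R : fieldType.
Implicit Types X Y Z W A B C : tensor R.

Definition sw (a b : nat) (n : nat) : nat := if n == a then b else if n == b then a else n.

Lemma np_sw N a b : (a < N)%N -> (b < N)%N -> np N (sw a b) (sw a b).
Proof.
move=> Ha Hb.
have L : forall k, (k < N)%N -> (sw a b k < N)%N.
  by move=> k Hk; rewrite /sw; case: eqP => _ //; case: eqP.
have I : forall k, sw a b (sw a b k) = k.
  move=> k; rewrite /sw; case: (k =P a) => [->|Ha'].
    by case: (b =P a) => [->|]; rewrite ?eqxx.
  case: (k =P b) => [->|Hb']; first by rewrite eqxx.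
  by case: (k =P a) => //; case: (k =P b).
by split; [|split; [|split]] => k Hk; rewrite ?I ?L.
Qed.

Lemma np_comp N g h g' h' : np N g h -> np N g' h' -> np N (fun n => g' (g n)) (fun n => h (h' n)).
Proof.
move=> [Hg [Hh [Hhg Hgh]]] [Hg' [Hh' [Hhg' Hgh']]].
split; [|split; [|split]] => k Hk.
- by apply: Hg'; apply: Hg.
- by apply: Hh; apply: Hh'.
- by rewrite Hhg' ?Hhg // Hg.
- by rewrite Hgh ?Hgh' // Hh'.
Qed.

Lemma mat_perm Z p q : (p < q)%N -> (q < tord Z)%N ->
  (forall n, (n < tord Z)%N -> n != p -> n != q -> dim Z n = 1%N) ->
  exists W, sim_step Z W /\ ml W /\ \rank (flatmx W 0 1) = \rank (flatmx Z p q).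
Proof.
move=> Hpq Hq Hd.
have Hp : (p < tord Z)%N by apply: ltn_trans Hpq Hq.
have H1 : (1 < tord Z)%N by apply: leq_ltn_trans Hq; apply: leq_ltn_trans Hpq.
have H0 : (0 < tord Z)%N by apply: ltn_trans H1.
pose g := fun n => sw 1 q (sw p 0 n).
pose h := fun n => sw p 0 (sw 1 q n).
have Hnp : np (tord Z) g h by apply: np_comp; apply: np_sw.
have q0 : q != 0%N by rewrite -lt0n; apply: leq_ltn_trans Hpq.
have gp : g p = 0%N by rewrite /g /sw eqxx /= eq_sym (negbTE q0).
have gq : g q = 1%N.
  rewrite /g /sw (gtn_eqF Hpq) (negbTE q0).
  by case: (q =P 1%N) => [->|]; rewrite ?eqxx.
have [W HW] := perm_ex Hnp.
exists W; split; first by right; exact: mpn_mode_perm Hnp HW.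
have tW : tord W = tord Z by case: HW.
split.
  split; first by rewrite tW.
  move=> n Hn2; rewrite tW => Hn; rewrite (mpn_dim Hnp HW Hn).
  have [_ [Hh [_ Hgh]]] := Hnp.
  apply: Hd; first exact: Hh.
    by apply/eqP => E; move: (Hgh n Hn); rewrite E gp => E'; rewrite -E' in Hn2.
  by apply/eqP => E; move: (Hgh n Hn); rewrite E gq => E'; rewrite -E' in Hn2.
by rewrite -(flat_perm Hnp HW _ Hp Hq) ?gp ?gq // neq_ltn Hpq.
Qed.

Lemma s_sim (s : tensor R -> nat) : QZC s -> forall X Y, sim X Y -> s X = s Y.
Proof.
move=> [_ [_ [_ [_ [Q4 [Q5 _]]]]]] X Y H.
have S : forall A B, sim_step A B -> s A = s X -> s B = s X.
  by move=> A B [[a [Ha HS]]|Hm] <-; [exact: Q4 HS | exact: Q5].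
by have [E _] := sim_inv S H; rewrite (E erefl).
Qed.

End Main.

Section Final.
Variable R : fieldType.
Implicit Types X Y Z W A B C : tensor R.

Definition Pset X := fun k => S0 X k \/ S1 X k \/ k = 2%N.

Definition Hr (r : tensor R -> nat) :=
  (forall X, r X = 0%N <-> is_zero X) /\ (forall X, r X = 1%N <-> rank_one X) /\
  (forall X Y, sim X Y -> r X = r Y) /\
  (forall X, ~ is_zero X -> ~ rank_one X -> is_max (Pset X) (r X)).

Lemma ge2 (f : tensor R -> nat) X : (f X = 0%N <-> is_zero X) -> (f X = 1%N <-> rank_one X) ->
  ~ is_zero X -> ~ rank_one X -> (2 <= f X)%N.
Proof.
move=> H0 H1 NZ NR; case E: (f X) => [|[|k]] //.
  by exfalso; apply: NZ; apply/H0.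
by exfalso; apply: NR; apply/H1.
Qed.

Lemma ord_ge2 X : ~ is_zero X -> ~ rank_one X -> (2 <= tord X)%N.
Proof.
move=> NZ NR; have := ord_pos X; case E: (tord X) => [|[|k]] // _.
by exfalso; apply: NR; apply: ord1_rank_one.
Qed.

Lemma r_le_s r s X : Hr r -> QZC s -> (r X <= s X)%N.
Proof.
move=> [H0 [H1 [Hs Hm]]] Qs.
have Qs' := Qs; case: Qs' => [Q0 [Q1 [Q2 [Q3 [Q4 [Q5 Q6]]]]]].
case: (classic (is_zero X)) => NZ; first by rewrite (proj2 (H0 X)).
case: (classic (rank_one X)) => NR; first by rewrite (proj2 (H1 X)) // (proj2 (Q1 X)).
have [P Hb] := Hm X NZ NR.
have sX : (2 <= s X)%N by apply: ge2.
suff : forall k, Pset X k -> (k <= s X)%N by apply.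
move=> k [[Y [Z [HY [HZ HI]]]]|[[Y [Z [HY [HZ Hk]]]]|->//]].
  rewrite -(Q2 _ _ _ (ord_ge2 NZ NR) HI) -(s_sim Qs HY); exact: Q6.
case: Hk => [[p [_ [_ [[_ ->]|[_ ->]]]]]|[p [q [Hpq [Hq [Hd ->]]]]]].
- by [].
- exact: leq_trans sX.
have [W [st [[W2 W1] HWr]]] := mat_perm Hpq Hq Hd.
rewrite -HWr -Q3 // (s_sim Qs (rst_sym _ _ _ _ (rst_step _ _ _ _ st))) -(s_sim Qs HY).
exact: Q6.
Qed.


Lemma dims_bound_sim M X Y : sim X Y -> (forall n, (n < tord X)%N -> (dim X n <= M)%N) ->
  forall n, (n < tord Y)%N -> (dim Y n <= M)%N.
Proof.
move=> H; have S : forall A B, sim_step A B -> (forall n, (n < tord A)%N -> (dim A n <= M)%N) ->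
   (forall n, (n < tord B)%N -> (dim B n <= M)%N).
  move=> A B [[a [_ HS]]|Hm] HA n.
    by have [-> ->] := scaled_dims HS; apply: HA.
  have [g [h [Hnp HB]]] := mode_permP Hm.
  have tB : tord B = tord A by case: HB.
  rewrite tB => Hn; rewrite (mpn_dim Hnp HB Hn); apply: HA.
  by case: Hnp => _ [Hh _]; apply: Hh.
by have [] := sim_inv S H.
Qed.

Lemma onedim_sim X Y : sim X Y -> (exists2 n, (n < tord X)%N & dim X n = 1%N) ->
  exists2 n, (n < tord Y)%N & dim Y n = 1%N.
Proof.
move=> H; have S : forall A B, sim_step A B -> (exists2 n, (n < tord A)%N & dim A n = 1%N) ->
   (exists2 n, (n < tord B)%N & dim B n = 1%N).
  move=> A B [[a [_ HS]]|Hm] [n Hn Hd].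
    by have [tB dB] := scaled_dims HS; exists n; rewrite ?tB ?dB.
  have [g [h [Hnp HB]]] := mode_permP Hm.
  have [tB [dB _]] := HB.
  by exists (g n); [rewrite tB; case: Hnp => Hg _; apply: Hg | rewrite dB].
by have [] := sim_inv S H.
Qed.

Lemma qzc2_r r M N X : Hr r -> (2 <= N)%N -> is_identity M N X -> r X = M.
Proof.
move=> [H0 [H1 [Hs Hm]]] HN HI.
have Mp := id_M_pos HI; have [E Hd] := id_dims HI.
case: M Mp HI Hd => [//|[|M]] _ HI Hd.
  by apply/H1; exact: id_one_r1 HI.
have NZ := id_nonzero HI; have NR := id_not_r1 HN (isT : (2 <= M.+2)%N) HI.
have [P Hb] := Hm X NZ NR; apply/eqP; rewrite eqn_leq; apply/andP; split.
  move: P; rewrite /Pset => -[[Y [Z [HY [HZ HIZ]]]]|[[Y [Z [HY [HZ Hk]]]]|->//]].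
    have [EZ HdZ] := id_dims HIZ.
    have tY : tord Y = tord X by apply: sim_tord.
    have H0X : (0 < tord X)%N := ord_pos X.
    have dZ0 : dim Z 0 = r X by apply: HdZ; rewrite EZ.
    rewrite -dZ0.
    apply: leq_trans (@sub_dim _ Z Y 0%N HZ _) _; first by rewrite tY.
    apply: (dims_bound_sim (sim_sym HY)); last by rewrite tY.
    by move=> n Hn; rewrite Hd.
  case: Hk => [[p [_ [_ [[_ ->]|[_ ->]]]]]|[p [q [Hpq [Hq [_ ->]]]]]] //.
  have Hp : (p < tord Z)%N by apply: ltn_trans Hpq Hq.
  have tZ : tord Z = tord Y by case: HZ.
  rewrite flatE; apply: leq_trans (mxr_row _ _ _) _.
  apply: leq_trans (@sub_dim _ Z Y p HZ _) _; first by rewrite -tZ.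
  apply: (dims_bound_sim (sim_sym HY)); last by rewrite -tZ.
  by move=> n Hn; rewrite Hd.
apply: Hb; left; exists X, X; split; first exact: rst_refl.
by split; [exact: sub_refl | rewrite E].
Qed.


Lemma s1_bound X Y Z k : ml X -> (2 <= \rank (flatmx X 0 1))%N -> sim Y X -> subtensor Z Y ->
  submatrix_rank Z k -> (k <= \rank (flatmx X 0 1))%N.
Proof.
move=> Hml H2 HY HZ Hk.
have [Z' [HZZ' HZ']] := sim_pull HY HZ.
have Hk' := smr_sim HZZ' Hk.
case: Hk' => [[p [_ [_ [[_ ->]|[_ ->]]]]]|[p [q [Hpq [Hq [_ ->]]]]]] //.
  exact: leq_trans H2.
have [E' [f [Hf He]]] := HZ'.
have [X2 X1] := Hml.
case: (leqP 2 q) => Hq2.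
  apply: leq_trans _ (leq_trans (isT : (1 <= 2)%N) H2).
  rewrite flatE; apply: leq_trans (mxr_col _ _ _) _.
  have Hq' : (q < tord X)%N by rewrite -E'.
  rewrite -(X1 q Hq2 Hq').
  exact: (@sub_dim _ Z' X q HZ').
have q1 : q = 1%N by apply/eqP; rewrite eqn_leq -ltnS Hq2 /=; exact: leq_ltn_trans (leq0n p) Hpq.
have p0 : p = 0%N by apply/eqP; rewrite -leqn0 -ltnS -q1.
rewrite q1 p0 in Hq *.
have Hf0 := Hf 0%N (leq_ltn_trans (leq0n 1) X2).
have Hf1 := Hf 1%N X2.
rewrite !flatE.
rewrite (@mxr_ext _ _ _ _ (fun x y => ent X (pqidx 0 1 (f 0%N x) (f 1%N y)))); last first.
  move=> x y Hx Hy; rewrite He; last exact: pqidx_valid.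
  rewrite (ml_ent Hml); last first.
    move=> n Hn; rewrite /pqidx; case: n Hn => [|[|n]] Hn /=.
    - by case: Hf0 => _; apply.
    - by case: Hf1 => _; apply.
    - by case: (Hf n.+2 Hn) => _; apply; apply: dim_pos; rewrite E'.
  by [].
apply: mxr_sub => x Hx; [by case: Hf0 => _; apply | by case: Hf1 => _; apply].
Qed.

Lemma qzc3_r r X : Hr r -> (2 <= tord X)%N ->
  (forall n, (2 <= n)%N -> (n < tord X)%N -> dim X n = 1%N) -> r X = \rank (flatmx X 0 1).
Proof.
move=> [H0 [H1 [Hs Hm]]] X2 X1.
have Hml : ml X by split.
case: (classic (is_zero X)) => NZ.
  by rewrite (proj2 (H0 X) NZ); symmetry; apply/(ml_zero Hml).
have rnz : \rank (flatmx X 0 1) != 0%N by apply/eqP => /(ml_zero Hml).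
case: (classic (rank_one X)) => NR.
  rewrite (proj2 (H1 X) NR); apply/eqP; rewrite eqn_leq ml_r1 //.
  by rewrite lt0n rnz.
have r2 : (2 <= \rank (flatmx X 0 1))%N.
  move: rnz; case E: (\rank (flatmx X 0 1)) => [|[|]] // _.
  by exfalso; apply: NR; apply: ml_one.
have [P Hb] := Hm X NZ NR; apply/eqP; rewrite eqn_leq; apply/andP; split.
  move: P; rewrite /Pset => -[[Y [Z [HY [HZ HIZ]]]]|[[Y [Z [HY [HZ Hk]]]]|->//]].
    have [EZ HdZ] := id_dims HIZ.
    have tY : tord Y = tord X by apply: sim_tord.
    have tZ : tord Z = tord Y by case: HZ.
    case: (leqP (tord X) 2) => Ht.
      have t2 : tord X = 2%N by apply/eqP; rewrite eqn_leq Ht X2.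
      apply: (s1_bound Hml r2 HY HZ); right; exists 0%N, 1%N; split => //.
      split; first by rewrite EZ t2.
      split; first by move=> n; rewrite EZ t2; case: n => [|[|]].
      by rewrite (id2_rank (M := r X)) // -t2.
    have [n Hn Hn1] := onedim_sim (sim_sym HY) (ex_intro2 _ _ 2%N Ht (X1 2%N (leqnn 2) Ht)).
    apply: leq_trans r2.
    rewrite -(HdZ n); last by rewrite tZ.
    by apply: leq_trans (@sub_dim _ Z Y n HZ Hn) _; rewrite Hn1.
  exact: (s1_bound Hml r2 HY HZ Hk).
apply: Hb; right; left; exists X, X; split; first exact: rst_refl.
split; first exact: sub_refl.
right; exists 0%N, 1%N; split => //; split => //.
by split => // n Hn H0' H1'; apply: X1 => //; move: H0' H1'; case: n Hn => [|[|]].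
Qed.


Lemma qzc6_r r X Y : Hr r -> subtensor Y X -> (r Y <= r X)%N.
Proof.
move=> [H0 [H1 [Hs Hm]]] HYX.
case: (classic (is_zero Y)) => ZY; first by rewrite (proj2 (H0 Y) ZY).
have NZX := sub_nonzero HYX ZY.
case: (classic (rank_one Y)) => RY.
  rewrite (proj2 (H1 Y) RY) lt0n; apply/eqP => /H0; exact: NZX.
have NRX : ~ rank_one X by move=> /(sub_rank_one HYX) [].
have [PY _] := Hm Y ZY RY; have [_ Hb] := Hm X NZX NRX; apply: Hb.
have tYX : tord Y = tord X by case: HYX.
move: PY; rewrite /Pset => -[[Y' [Z [HY [HZ HI]]]]|[[Y' [Z [HY [HZ Hk]]]]|->]]; last by right; right.
  have [X' [HX' HY']] := sim_push (sim_sym HY) HYX.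
  left; exists X', Z; split; first exact: sim_sym.
  by split; [exact: sub_trans HZ HY' | rewrite -tYX].
have [X' [HX' HY']] := sim_push (sim_sym HY) HYX.
right; left; exists X', Z; split; first exact: sim_sym.
by split; [exact: sub_trans HZ HY' | ].
Qed.

Lemma r_QZC r : Hr r -> QZC r.
Proof.
move=> Hr0; have Hr1 := Hr0; case: Hr1 => [H0 [H1 [Hs Hm]]].
split => //; split => //; split; first by move=> M N X HN HI; exact: qzc2_r Hr0 HN HI.
split; first by move=> X X2 X1; exact: qzc3_r.
split; first by move=> a X Y Ha HS; symmetry; apply: Hs; apply: rst_step; left; exists a.
split; first by move=> X Y Hm'; symmetry; apply: Hs; apply: rst_step; right.
by move=> X Y HYX; exact: qzc6_r.
Qed.

End Final.

Unset Implicit Arguments.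
Local Close Scope ring_scope.

Theorem proposition3p7 (R : realType) (r : tensor R -> nat) :
  (forall X, r X = 0%N <-> is_zero X) ->
  (forall X, r X = 1%N <-> rank_one X) ->
  (forall X Y, sim X Y -> r X = r Y) ->
  (forall X, ~ is_zero X -> ~ rank_one X ->
     is_max (fun k => S0 X k \/ S1 X k \/ k = 2%N) (r X)) ->
  forall X, is_min (mu_set X) (r X).
Proof.
move=> H0 H1 Hs Hm X.
have Hr0 : Hr r by split => //; split => //; split.
split; first by exists r; split => //; exact: r_QZC.
by move=> k [s [Qs <-]]; exact: r_le_s.
Qed.
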